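(* Every sequential rule and every reverse sequential rule (as defined in the context) is a linear mapping from $\mathcal E^*$ to $2^{\mathcal A_k}$.
   Context: Let $\mathcal A=[m]$, $k\le m$, and for $i\le m$ let $\mathcal A_i$ be the set of $i$-element subsets of $\mathcal A$. The preference space is $\mathcal E=2^{\mathcal A}$; a profile is $P=(A_1,\dots,A_n)\in\mathcal E^n$, $n\ge1$, and $\mathcal E^*=\bigcup_{n\ge1}\mathcal E^n$. $\mathrm{Hist}(P)\in\mathbb Z_{\ge0}^{|\mathcal E|}$ counts the occurrences of each ballot in $P$. A mapping $f:\mathcal E^*\to\mathcal D$ ($\mathcal D$ finite) is linear if there exist $\vec h_1,\dots,\vec h_K\in\mathbb R^{|\mathcal E|}$ and $g:\{+,-,0\}^K\to\mathcal D$ with $f(P)=g(\mathrm{sign}(\mathrm{Hist}(P)\cdot\vec h_1),\dots,\mathrm{sign}(\mathrm{Hist}(P)\cdot\vec h_K))$ for all $P$. For a function $\mathbf s_i:2^{\mathcal A}\times\mathcal A_i\to\mathbb R$ and $M\in\mathcal A_i$ write $\mathbf s_i(P,M)=\sum_{j=1}^n\mathbf s_i(A_j,M)$. Sequential rule: given $\mathbf s_1,\dots,\mathbf s_k$ with $\mathbf s_i:2^{\mathcal A}\times\mathcal A_i\to\mathbb R$, set $\mathcal S_0=\{\emptyset\}$ and for $i=1,\dots,k$, $\mathcal S_i=\arg\max\{\mathbf s_i(P,M\cup\{a\}): M\in\mathcal S_{i-1}, a\in\mathcal A\setminus M\}$ (the set of all maximizing sets $M\cup\{a\}$); output $\mathcal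 S_k$. Reverse sequential rule: given $\mathbf s_1,\dots,\mathbf s_{m-k}$ with $\mathbf s_i:2^{\mathcal A}\times\mathcal A_{m-i}\to\mathbb R$, set $\mathcal S_0=\{\mathcal A\}$ and for $i=1,\dots,m-k$, $\mathcal S_i=\arg\max\{\mathbf s_i(P,M\setminus\{a\}): M\in\mathcal S_{i-1}, a\in M\}$; output $\mathcal S_{m-k}$. *)

(* Defs.v *)
From HB Require Import structures.
From mathcomp Require Import all_boot all_order all_algebra.
From mathcomp Require Import reals.
Set Implicit Arguments. Unset Strict Implicit. Unset Printing Implicit Defensive.
Import Order.TTheory GRing.Theory Num.Theory.
Local Open Scope ring_scope.

(* Candidates A = 'I_m; ballots are subsets {set 'I_m}; a profile is a
   (nonempty) sequence of ballots. *)

Inductive sgn := SPos | SNeg | SZero.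

Definition sign_of (R : realType) (x : R) : sgn :=
  if 0 < x then SPos else if x < 0 then SNeg else SZero.

Definition hist_dot (R : realType) (m : nat) (P : seq {set 'I_m})
    (h : {set 'I_m} -> R) : R :=
  \sum_(B : {set 'I_m}) (count_mem B P)%:R * h B.

Definition linear_mapping (R : realType) (m : nat) (D : finType)
    (f : seq {set 'I_m} -> D) : Prop :=
  exists (K : nat) (h : 'I_K -> {set 'I_m} -> R) (g : ('I_K -> sgn) -> D),
    forall P : seq {set 'I_m}, (0 < size P)%N ->
      f P = g (fun j => sign_of (hist_dot P (h j))).

Definition prof_score (R : realType) (m : nat)
    (si : {set 'I_m} -> {set 'I_m} -> R) (P : seq {set 'I_m}) (M : {set 'I_m}) : R :=
  \sum_(A <- P) si A M.

Definition argmax_set (R : realType) (m : nat) (F : {set 'I_m} -> R)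
    (C : {set {set 'I_m}}) : {set {set 'I_m}} :=
  [set X in C | [forall Y in C, F Y <= F X]].

(* Sequential rule; s i is the scoring function s_i (only evaluated on
   i-element sets M). *)
Fixpoint seq_S (R : realType) (m : nat) (s : nat -> {set 'I_m} -> {set 'I_m} -> R)
    (P : seq {set 'I_m}) (i : nat) : {set {set 'I_m}} :=
  match i with
  | 0 => [set set0]
  | i'.+1 =>
      argmax_set (prof_score (s i'.+1) P)
        [set M :|: [set a] | M in seq_S s P i', a in ~: M]
  end.

Definition sequential_rule (R : realType) (m k : nat)
    (s : nat -> {set 'I_m} -> {set 'I_m} -> R) (P : seq {set 'I_m}) :
    {set {set 'I_m}} := seq_S s P k.

(* Reverse sequential rule; s i is evaluated on (m - i)-element sets. *)
Fixpoint rev_S (R : realType) (m : nat) (s : nat -> {set 'I_m} -> {set 'I_m} -> R)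
    (P : seq {set 'I_m}) (i : nat) : {set {set 'I_m}} :=
  match i with
  | 0 => [set setT]
  | i'.+1 =>
      argmax_set (prof_score (s i'.+1) P)
        [set M :\ a | M in rev_S s P i', a in M]
  end.

Definition reverse_sequential_rule (R : realType) (m k : nat)
    (s : nat -> {set 'I_m} -> {set 'I_m} -> R) (P : seq {set 'I_m}) :
    {set {set 'I_m}} := rev_S s P (m - k).

(* Main.v *)
Require Import Defs.
From mathcomp Require Import all_boot all_order all_algebra.
From mathcomp Require Import reals.
From Stdlib Require Import FunctionalExtensionality.
Set Implicit Arguments. Unset Strict Implicit. Unset Printing Implicit Defensive.
Import Order.TTheory GRing.Theory Num.Theory.
Local Open Scope ring_scope.

Definition notneg (z : sgn) : bool := if z is SNeg then false else true.

Lemma sign_nneg (R : realType) (x : R) : notneg (sign_of x) = (0 <= x).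
Proof. by rewrite /sign_of; case: ltrgtP. Qed.

Lemma sum_hist (R : realType) (m : nat) (P : seq {set 'I_m}) (F : {set 'I_m} -> R) :
  \sum_(A <- P) F A = hist_dot P F.
Proof.
rewrite /hist_dot; elim: P => [|a P IH].
  by rewrite big_nil; symmetry; apply: big1 => B _; rewrite mul0r.
rewrite big_cons IH.
have E : forall B, count_mem B (a :: P) = ((a == B) + count_mem B P)%N by [].
under [RHS]eq_bigr => B _ do rewrite E natrD mulrDl.
rewrite big_split /=; congr (_ + _); rewrite (bigD1 a) //= eqxx mul1r big1 ?addr0 // => B /negbTE.
by rewrite eq_sym => ->; rewrite mul0r.
Qed.

Lemma gen_linear (R : realType) (m : nat) (D : finType) (T : finType)
  (f : seq {set 'I_m} -> D) (hT : T -> {set 'I_m} -> R) (g' : (T -> sgn) -> D) :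
  (forall P, (0 < size P)%N -> f P = g' (fun t => sign_of (hist_dot P (hT t)))) ->
  linear_mapping R f.
Proof.
move=> Hf; exists #|T|, (fun j => hT (enum_val j)), (fun s => g' (fun t => s (enum_rank t))).
move=> P HP; rewrite Hf //; congr g'; apply: functional_extensionality => t.
by rewrite enum_rankK.
Qed.

Fixpoint seqG (m : nat) (init : {set {set 'I_m}})
  (stepC : {set {set 'I_m}} -> {set {set 'I_m}})
  (cmp : nat -> {set 'I_m} -> {set 'I_m} -> bool) (i : nat) : {set {set 'I_m}} :=
  match i with
  | 0 => init
  | i'.+1 => [set X in stepC (seqG init stepC cmp i') |
               [forall Y in stepC (seqG init stepC cmp i'), cmp i'.+1 X Y]]
  end.

Lemma gen_rule (R : realType) (m N : nat) (init : {set {set 'I_m}})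
  (stepC : {set {set 'I_m}} -> {set {set 'I_m}})
  (s : nat -> {set 'I_m} -> {set 'I_m} -> R)
  (Sq : seq {set 'I_m} -> nat -> {set {set 'I_m}}) :
  (forall P, Sq P 0 = init) ->
  (forall P i, Sq P i.+1 = argmax_set (prof_score (s i.+1) P) (stepC (Sq P i))) ->
  linear_mapping R (fun P => Sq P N).
Proof.
move=> H0 HS.
pose T := ('I_N.+1 * {set 'I_m} * {set 'I_m})%type.
pose hT := fun (t : T) B => s t.1.1 B t.1.2 - s t.1.1 B t.2.
apply: (@gen_linear R m _ T _ hT
  (fun sg => seqG init stepC (fun j X Y => notneg (sg (inord j, X, Y))) N)).
move=> P _.
suff: forall i, (i <= N)%N -> Sq P i =
   seqG init stepC
     (fun j X Y => notneg (sign_of (hist_dot P (hT (inord j, X, Y))))) i by apply.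
elim=> [|i IH] Hi /=; first by rewrite H0.
rewrite HS IH ?(ltnW Hi) // /argmax_set; apply/setP => X; rewrite !inE.
congr (_ && _); apply: eq_forallb => Y; congr (_ ==> _).
rewrite sign_nneg /hT /= inordK // -sum_hist /prof_score sumrB subr_ge0 //.
Qed.

Theorem theorem2 (R : realType) (m k : nat) (hkm : (k <= m)%N) :
  (forall s : nat -> {set 'I_m} -> {set 'I_m} -> R,
      linear_mapping R (sequential_rule k s)) /\
  (forall s : nat -> {set 'I_m} -> {set 'I_m} -> R,
      linear_mapping R (reverse_sequential_rule k s)).
Proof.
split=> s.
  exact: (@gen_rule R m k [set set0]
            (fun S => [set M :|: [set a] | M in S, a in ~: M]) s (seq_S s)).
exact: (@gen_rule R m (m - k) [set setT]
          (fun S => [set M :\ a | M in S, a in M]) s (rev_S s)).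
Qed.
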